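(* For every graph $G=(V,E)$, the graph $G'$ defined below is chordal bipartite.
   Context: $G'$ has vertices $x_v,y_v$ for each $v\in V$ and $p_{e,u},q_{e,u},p_{e,v},q_{e,v}$ for each edge $e=uv\in E$. Its edges are: $x_vy_u$ for all $u,v\in V$ (including $u=v$); and for each $e=uv\in E$, the edges $p_{e,u}q_{e,u}$, $p_{e,v}q_{e,v}$, $x_up_{e,u}$, $y_vq_{e,u}$, $x_vp_{e,v}$, $y_uq_{e,v}$. A graph is chordal bipartite if it is bipartite and every cycle of length at least $6$ has a chord. *)

(* Defs.v *)
From mathcomp Require Import all_boot.
Set Implicit Arguments. Unset Strict Implicit. Unset Printing Implicit Defensive.

(* A simple graph on a finite vertex type V is a relation adj : rel V that is
   symmetric and irreflexive. *)

Definition bipartite (V : finType) (adj : rel V) : Prop :=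
  exists c : V -> bool, forall x y, adj x y -> c x != c y.

Definition is_cycle (V : finType) (adj : rel V) (s : seq V) : Prop :=
  [/\ uniq s, 3 <= size s & cycle adj s].

Definition has_chord (V : finType) (adj : rel V) (s : seq V) : Prop :=
  exists x y, [/\ x \in s, y \in s, (x != y) && adj x y, y != next s x & x != next s y].

Definition chordal_bipartite (V : finType) (adj : rel V) : Prop :=
  bipartite adj /\
  forall s : seq V, is_cycle adj s -> 6 <= size s -> has_chord adj s.

(* The construction G'.  Edge-endpoint pairs (e, u) with e = uv are encoded
   by the ordered pair (u, v) with e u v. *)

(* vertices: inl (inl v) = x_v, inl (inr v) = y_v,
             inr (inl d) = p_{e,u}, inr (inr d) = q_{e,u}  for d = (u,v) *)
Definition Gp_vert (T : finType) (e : rel T) : finType :=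
  ((T + T) + ({p : T * T | e p.1 p.2} + {p : T * T | e p.1 p.2}))%type.

Definition Gp_adj0 (T : finType) (e : rel T) (a b : Gp_vert e) : bool :=
  match a, b with
  | inl (inl v), inl (inr u) => true
  | inr (inl d), inr (inr d') => d == d'
  | inl (inl w), inr (inl d) => w == (val d).1
  | inl (inr w), inr (inr d) => w == (val d).2
  | _, _ => false
  end.

Definition Gp_adj (T : finType) (e : rel T) : rel (Gp_vert e) :=
  fun a b => Gp_adj0 a b || Gp_adj0 b a.

(* Main.v *)
Require Import Defs.
From mathcomp Require Import all_boot.
Set Implicit Arguments. Unset Strict Implicit. Unset Printing Implicit Defensive.

Lemma K (V : finType) (adj : rel V) a b c d t1 t :
  uniq [:: a, b, c, d, t1 & t] -> adj a d -> has_chord adj [:: a, b, c, d, t1 & t].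
Proof.
move=> U h; move: (U); rewrite /= !inE !negb_or => /andP[/and5P[ab ac ad at1 _] /andP[/and4P[bc bd bt1 _] /andP[/and3P[cd ct1 _] /andP[/andP[dt1 _] _]]]].
exists a, d; split.
- by rewrite inE eqxx.
- by rewrite !inE eqxx !orbT.
- by rewrite ad h.
- by rewrite /next /= eqxx eq_sym.
- by rewrite /next /= (eq_sym d a) (eq_sym d b) (eq_sym d c) (negbTE ad) (negbTE bd) (negbTE cd) eqxx.
Qed.

Lemma R1 (V : finType) (adj : rel V) n s : uniq s -> has_chord adj (rot n s) -> has_chord adj s.
Proof.
move=> U [x [y [xs ys xy h1 h2]]]; exists x, y; split => //.
- by rewrite -(mem_rot n).
- by rewrite -(mem_rot n).
- by rewrite -(next_rot n U).
- by rewrite -(next_rot n U).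
Qed.

Lemma R2 (V : finType) (adj : rel V) s : symmetric adj -> uniq s -> has_chord adj (rev s) -> has_chord adj s.
Proof.
move=> sy U [x [y [xs ys /andP[xy axy] h1 h2]]]; rewrite !mem_rev in xs ys.
rewrite (next_rev U) in h1; rewrite (next_rev U) in h2.
exists y, x; split => //.
- by rewrite eq_sym xy sy.
- by apply: contra h1 => /eqP ->; rewrite (prev_next U).
- by apply: contra h2 => /eqP ->; rewrite (prev_next U).
Qed.

Lemma N (V : finType) (s : seq V) x : uniq s -> 3 <= size s -> x \in s -> next s x != prev s x.
Proof.
move=> U sz /rot_to [i s' E].
have U' : uniq (x :: s') by rewrite -E rot_uniq.
have sz' : 3 <= size (x :: s') by rewrite -E size_rot.
rewrite -(next_rot i U) -(prev_rot i U) E.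
apply/eqP => h.
have : next (x :: s') (next (x :: s') x) = x by rewrite h (next_prev U').
case: s' U' sz' {E h} => [|a [|b r]] //= U' _.
rewrite /next /= eqxx.
move: U'; rewrite /= !inE !negb_or => /andP[/and3P[xa xb _] _].
by rewrite eq_sym (negbTE xa) eqxx => /eqP; rewrite eq_sym (negbTE xb).
Qed.

Section G.
Variables (T : finType) (e : rel T).
Local Notation adj := (@Gp_adj T e).
Local Notation Vt := (Gp_vert e).

Lemma Gp_sym : symmetric adj.
Proof. by move=> a b; rewrite /Gp_adj orbC. Qed.

Lemma nbrP d (w : Vt) : adj (inr (inl d)) w -> w = inl (inl (val d).1) \/ w = inr (inr d).
Proof.
case: w => [[v|v]|[d'|d']]; rewrite /Gp_adj /= ?orbF //.
- by move/eqP => ->; left.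
- by move/eqP => ->; right.
Qed.

Lemma nbrQ d (w : Vt) : adj (inr (inr d)) w -> w = inl (inr (val d).2) \/ w = inr (inl d).
Proof.
case: w => [[v|v]|[d'|d']]; rewrite /Gp_adj /= ?orbF //.
- by move/eqP => ->; left.
- by move/eqP => ->; right.
Qed.

Lemma adj_next (s : seq Vt) z : cycle adj s -> z \in s -> adj z (next s z).
Proof. by move=> C zs; apply: next_cycle. Qed.

Lemma adj_prev (s : seq Vt) z : cycle adj s -> z \in s -> adj z (prev s z).
Proof. by move=> C zs; rewrite Gp_sym; apply: prev_cycle. Qed.

Lemma M (s : seq Vt) d : uniq s -> cycle adj s -> 6 <= size s ->
  inr (inl d) \in s -> next s (inr (inl d)) = inr (inr d) -> has_chord adj s.
Proof.
move=> U C sz Ps nPQ.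
set P : Vt := inr (inl d) in Ps nPQ *.
set Q : Vt := inr (inr d) in nPQ *.
set X : Vt := inl (inl (val d).1).
set Y : Vt := inl (inr (val d).2).
have Qs : Q \in s by rewrite -nPQ mem_next.
have sz3 : 3 <= size s by apply: leq_trans sz.
have pPX : prev s P = X.
  case: (nbrP (adj_prev C Ps)) => // E.
  by move: (N U sz3 Ps); rewrite nPQ E eqxx.
have nQY : next s Q = Y.
  case: (nbrQ (adj_next C Qs)) => // E.
  by move: (congr1 (prev s) E); rewrite (prev_next U) pPX.
have Xs : X \in s by rewrite -pPX mem_prev.
have nXP : next s X = P by rewrite -pPX (next_prev U).
case/rot_to: Xs => i s' E.
apply: (R1 (n:=i) U); rewrite E.
have U1 : uniq (X :: s') by rewrite -E rot_uniq.
have sz1 : 6 <= size (X :: s') by rewrite -E size_rot.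
have nE : next (X :: s') =1 next s by move=> z; rewrite -E (next_rot i U).
case: s' U1 sz1 nE {E} => [|c1 [|c2 [|c3 [|c4 [|c5 r]]]]] // U1 _ nE.
have h1 : c1 = P by rewrite -nXP -nE /next /= eqxx.
move: (U1); rewrite /= !inE !negb_or => /andP[/and5P[xc1 xc2 xc3 _ _] /andP[/and4P[c12 c13 _ _] _]].
have h2 : c2 = Q by rewrite -nPQ -h1 -nE /next /= eq_sym (negbTE xc1) eqxx.
have h3 : c3 = Y by rewrite -nQY -h2 -nE /next /= (eq_sym c2 X) (negbTE xc2) (eq_sym c2 c1) (negbTE c12) eqxx.
by apply: K => //; rewrite h3.
Qed.
End G.

Definition isl (T : finType) (e : rel T) (z : Gp_vert e) : bool :=
  if z is inl _ then true else false.

Theorem lemma11 (T : finType) (e : rel T) :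
  symmetric e -> irreflexive e -> chordal_bipartite (@Gp_adj T e).
Proof.
move=> _ _; split.
  exists (fun z : Gp_vert e => match z with inl (inl _) => true | inr (inr _) => true | _ => false end).
  by move=> [[?|?]|[?|?]] [[?|?]|[?|?]]; rewrite /Gp_adj /=.
move=> s [U sz3 C] sz6.
case: (boolP (all (@isl T e) s)) => [Hall | /allPn [z zs nz]].
  case: s U C sz6 Hall {sz3} => [|a [|b [|c [|d [|t1 t]]]]] // U C _ Hall.
  apply: K => //.
  move: C => /= /and4P[ab bc cd _]; move: Hall => /= /and5P[ha hb hc hd _].
  move: ab bc cd; clear U.
  by case: a ha => [[a|a]|a] //; case: b hb => [[b|b]|b] //; case: c hc => [[c|c]|c] //;
     case: d hd => [[d|d]|d] //; rewrite /Gp_adj.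
have sz3' : 3 <= size s by [].
have key : exists d, inr (inl d) \in s /\
   (next s (inr (inl d)) = inr (inr d) \/ prev s (inr (inl d)) = inr (inr d)).
  case: z zs nz => [//|[d|d]] zs _.
    exists d; split => //.
    have := N U sz3' zs.
    case: (nbrP (adj_next C zs)) => ->; last by left.
    case: (nbrP (adj_prev C zs)) => ->; last by right.
    by rewrite eqxx.
  have := N U sz3' zs.
  case: (nbrQ (adj_next C zs)) => E1.
    case: (nbrQ (adj_prev C zs)) => E2; first by rewrite E1 E2 eqxx.
    exists d; split; first by rewrite -E2 mem_prev.
    by left; rewrite -E2 (next_prev U).
  move=> _; exists d; split; first by rewrite -E1 mem_next.
  by right; rewrite -E1 (prev_next U).
case: key => d [Ps [nPQ | pPQ]]; first exact: (M U C sz6 Ps nPQ).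
apply: (R2 (@Gp_sym T e) U).
have Ur : uniq (rev s) by rewrite rev_uniq.
apply: (M (d:=d) Ur).
- apply: (cycle_from_next Ur) => x; rewrite mem_rev => xs.
  by rewrite (next_rev U); apply: adj_prev.
- by rewrite size_rev.
- by rewrite mem_rev.
- by rewrite (next_rev U).
Qed.
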